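(* For each positive integer $k$, let $z^{m}_k$ be the optimal value of the linear program \[ \max \sum_{j=1}^k\alpha_j \ \text{ s.t. } f+\sum_{j=1}^k d_j\le 1;\ \alpha_j\le\alpha_{j+1}\ (1\le j<k);\ \alpha_j\le\alpha_l+d_j+d_l\ (1\le j,l\le k);\ x_{jl}\ge\alpha_j-d_l\ (1\le j\le l\le k);\ \sum_{l=j}^k x_{jl}\le f\ (1\le j\le k);\ \alpha_j,d_j,f,x_{jl}\ge0, \] and let $x^{m}_k$ be the optimal value of the linear program obtained from it by imposing the constraint $x_{jl}\ge\alpha_j-d_l$ only for $1\le j<l\le k$ (the variables $x_{jj}$ still appear in $\sum_{l=j}^k x_{jl}\le f$ and are only required to be non-negative). Then $\sup_{k \ge 1} z^{m}_k = \inf_{k\ge1} x^{m}_k$. *)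

(* Defs.v *)
From HB Require Import structures.
From mathcomp Require Import all_boot all_order all_algebra.
From mathcomp Require Import boolp classical_sets reals constructive_ereal ereal.
Set Implicit Arguments. Unset Strict Implicit. Unset Printing Implicit Defensive.
Import Order.TTheory GRing.Theory Num.Theory.
Local Open Scope ring_scope.
Local Open Scope classical_set_scope.

(* Indices 1..k of the paper are the ordinals 0..k-1 of 'I_k.
   [diag = true]  : constraint x_jl >= alpha_j - d_l for j <= l (program z^m_k)
   [diag = false] : constraint x_jl >= alpha_j - d_l for j <  l (program x^m_k).
   Variables x_jl with j > l are not part of the program; they appear in no
   constraint nor in the objective. *)
Definition lp_feasible (R : realType) (k : nat) (diag : bool)
  (alpha d : 'I_k -> R) (f : R) (x : 'I_k -> 'I_k -> R) : Prop :=
  [/\ f + \sum_(j < k) d j <= 1,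
      (forall j l : 'I_k, val l = (val j).+1 -> alpha j <= alpha l),
      (forall j l : 'I_k, alpha j <= alpha l + d j + d l) &
      (forall j l : 'I_k, (if diag then (j <= l)%N else (j < l)%N) ->
                          alpha j - d l <= x j l)] /\
  [/\ (forall j : 'I_k, \sum_(l < k | (j <= l)%N) x j l <= f),
      (forall j, 0 <= alpha j), (forall j, 0 <= d j), 0 <= f &
      (forall j l : 'I_k, (j <= l)%N -> 0 <= x j l)].

Definition lp_value (R : realType) (k : nat) (diag : bool) : \bar R :=
  ereal_sup [set r : \bar R | exists alpha d f x,
     @lp_feasible R k diag alpha d f x /\ r = (\sum_(j < k) alpha j)%:E].

Definition zm (R : realType) (k : nat) : \bar R := lp_value R k true.
Definition xm (R : realType) (k : nat) : \bar R := lp_value R k false.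

(* Main.v *)
Require Import Defs.
From HB Require Import structures.
From mathcomp Require Import all_boot all_order all_algebra.
From mathcomp Require Import boolp classical_sets reals constructive_ereal ereal.
From mathcomp Require Import ring lra zify.
Set Implicit Arguments. Unset Strict Implicit. Unset Printing Implicit Defensive.
Import Order.TTheory GRing.Theory Num.Theory.
Local Open Scope ring_scope.

Lemma mono_le (R : realType) k (a : 'I_k -> R) :
  (forall j l : 'I_k, val l = (val j).+1 -> a j <= a l) ->
  forall j l : 'I_k, (j <= l)%N -> a j <= a l.
Proof.
move=> H.
suff S : forall n (j l : 'I_k), val l = (val j + n)%N -> a j <= a l.
  move=> j l jl; apply: (S (l - j)%N); rewrite subnKC //.
elim=> [|n IH] j l E.
  by rewrite addn0 in E; rewrite (val_inj E).
have lt : (val j + n < k)%N by move: (ltn_ord l); rewrite E addnS; apply: ltnW.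
apply: le_trans (IH j (Ordinal lt) erefl) _.
by apply: H => /=; rewrite E addnS.
Qed.

Lemma flat (R : realType) (a b : nat) (G : nat -> R) :
  \sum_(J < a) \sum_(i < b) G (J * b + i)%N = \sum_(p < a * b) G p.
Proof.
elim: a => [|a IH]; first by rewrite big_ord0 mul0n big_ord0.
rewrite big_ord_recr /= IH mulSnr big_split_ord /=.
by congr (_ + _).
Qed.

Lemma reidx (R : realType) (K M : nat) (F : 'I_K.+1 -> R) :
  \sum_(J < M.+1) \sum_(i < K.+1) F (inord ((J * K.+1 + i) %/ M.+1)) =
  M.+1%:R * \sum_(j < K.+1) F j.
Proof.
have E1 := flat K.+1 M.+1 (fun p => F (inord (p %/ M.+1))).
rewrite mulnC in E1; rewrite /= in E1.
have E2 := flat M.+1 K.+1 (fun p => F (inord (p %/ M.+1))).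
rewrite /= in E2; rewrite E2 -E1.
rewrite mulr_sumr; apply: eq_bigr => j _.
rewrite (eq_bigr (fun _ => F j)); first by rewrite sumr_const card_ord mulr_natl.
move=> s _; rewrite divnMDl // divn_small // addn0 inord_val //.
Qed.

Lemma onen0 (R : realType) (n : nat) : (1 + n%:R : R) != 0.
Proof. by rewrite addrC natr1 pnatr_eq0. Qed.

Definition jj (K M : nat) (J : 'I_M.+1) (i : 'I_K.+1) : 'I_K.+1 :=
  inord ((J * K.+1 + i) %/ M.+1).

Lemma jjE K M (J : 'I_M.+1) (i : 'I_K.+1) : nat_of_ord (jj J i) = ((J * K.+1 + i) %/ M.+1)%N.
Proof.
rewrite /jj inordK // ltn_divLR //.
have HJ := ltn_ord J; have Hi := ltn_ord i. nia.
Qed.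

Lemma jj_le K M (J L : 'I_M.+1) (i i' : 'I_K.+1) :
  (J * K.+1 + i <= L * K.+1 + i')%N -> (jj J i <= jj L i')%N.
Proof. by move=> H; rewrite !jjE leq_div2r. Qed.

Lemma jj_lt K M (J L : 'I_M.+1) (i i' : 'I_K.+1) :
  (J < L)%N -> (jj J i <= jj L i')%N.
Proof. move=> H; apply: jj_le; have Hi := ltn_ord i. nia. Qed.

Lemma jj_same K M (J L : 'I_M.+1) (i : 'I_K.+1) :
  (J <= L)%N -> (jj J i <= jj L i)%N.
Proof. move=> H; apply: jj_le. nia. Qed.

Lemma reidx' (R : realType) (K M : nat) (F : 'I_K.+1 -> R) :
  \sum_(J < M.+1) \sum_(i < K.+1) F (jj J i) = M.+1%:R * \sum_(j < K.+1) F j.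
Proof. exact: reidx. Qed.

Lemma constrA (R : realType) (K M : nat) (a d : 'I_K.+1 -> R) f x :
  @lp_feasible R K.+1 true a d f x ->
  exists a' d' f' x', @lp_feasible R M.+1 false a' d' f' x' /\
     \sum_j a' j = \sum_j a j.
Proof.
move=> [[Hb Hm Hp Hc] [Hr Ha Hd Hf Hx]].
set c := (M.+1%:R^-1 : R).
have c0 : 0 <= c by rewrite invr_ge0 ler0n.
have k0 : 0 <= (K.+1%:R^-1 : R) by rewrite invr_ge0 ler0n.
pose a' := fun J : 'I_M.+1 => c * \sum_(i < K.+1) a (jj J i).
pose d' := fun J : 'I_M.+1 => c * \sum_(i < K.+1) d (jj J i).
pose x' := fun J L : 'I_M.+1 => if (J < L)%N then
   (K.+1%:R^-1 * c) * \sum_(i < K.+1) \sum_(i' < K.+1) x (jj J i) (jj L i') else 0.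
have sumE : forall F : 'I_K.+1 -> R,
   \sum_(J < M.+1) c * \sum_(i < K.+1) F (jj J i) = \sum_j F j.
  by move=> F; rewrite -mulr_sumr reidx' mulrA mulVf ?mul1r // pnatr_eq0.
have amono := mono_le Hm.
exists a', d', f, x'; split; last by rewrite sumE.
split; split.
- by rewrite sumE.
- move=> J L E; rewrite /a' ler_wpM2l //; apply: ler_sum => i _.
  by apply: amono; apply: jj_same; rewrite E.
- move=> J L; rewrite /a' /d' -!mulrDr ler_wpM2l // -!big_split /=.
  by apply: ler_sum => i _; apply: Hp.
- move=> J L /= JL; rewrite /x' JL.
  have E : \sum_(i < K.+1) \sum_(i' < K.+1) (a (jj J i) - d (jj L i')) =
      K.+1%:R * (\sum_(i < K.+1) a (jj J i) - \sum_(i' < K.+1) d (jj L i')).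
    rewrite (eq_bigr (fun i => K.+1%:R * a (jj J i) - \sum_(i' < K.+1) d (jj L i'))); last first.
      by move=> i _; rewrite sumrB sumr_const card_ord mulr_natl.
    by rewrite sumrB -mulr_sumr sumr_const card_ord mulrBr !mulr_natl.
  have -> : a' J - d' L = K.+1%:R^-1 * c *
      \sum_(i < K.+1) \sum_(i' < K.+1) (a (jj J i) - d (jj L i')).
    by rewrite E mulrAC mulKf ?pnatr_eq0 // [RHS]mulrC mulrBr.
  rewrite ler_wpM2l ?mulr_ge0 //; apply: ler_sum => i _; apply: ler_sum => i' _.
  by apply: Hc; apply: jj_lt.
- move=> J.
  pose X := fun (i : 'I_K.+1) (L : 'I_M.+1) (i' : 'I_K.+1) =>
     if (jj J i <= jj L i')%N then x (jj J i) (jj L i') else 0.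
  have X0 : forall i L i', 0 <= X i L i'.
    by move=> i L i'; rewrite /X; case: ifP => // H; apply: Hx.
  have step : forall L : 'I_M.+1, (if (J <= L)%N then x' J L else 0) <=
      K.+1%:R^-1 * c * \sum_(i < K.+1) \sum_(i' < K.+1) X i L i'.
    move=> L; rewrite /x'; case: (ltnP J L) => JL.
      rewrite (ltnW JL) ler_wpM2l ?mulr_ge0 //; apply: ler_sum => i _.
      by apply: ler_sum => i' _; rewrite /X (jj_lt _ _ JL).
    have H0 : 0 <= K.+1%:R^-1 * c * \sum_(i < K.+1) \sum_(i' < K.+1) X i L i'.
      by rewrite !mulr_ge0 //; apply: sumr_ge0 => i _; apply: sumr_ge0.
    by case: ifP.
  rewrite big_mkcond /=; apply: le_trans (ler_sum _ (fun L _ => step L)) _.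
  rewrite -mulr_sumr exchange_big /=.
  have rowi : forall i : 'I_K.+1,
      \sum_(L < M.+1) \sum_(i' < K.+1) X i L i' <= M.+1%:R * f.
    move=> i; rewrite /X.
    rewrite (@reidx' R K M (fun j' => if (jj J i <= j')%N then x (jj J i) j' else 0)).
    by rewrite ler_wpM2l ?ler0n // -big_mkcond /=; apply: Hr.
  apply: le_trans (ler_wpM2l _ (ler_sum _ (fun i _ => rowi i))) _.
    by rewrite mulr_ge0.
  rewrite sumr_const card_ord -mulr_natl /c.
  set LHS := (X in X <= f).
  have -> : LHS = f by rewrite /LHS; field; rewrite !onen0.
  by [].
- by move=> J; rewrite mulr_ge0 //; apply: sumr_ge0.
- by move=> J; rewrite mulr_ge0 //; apply: sumr_ge0.
- exact: Hf.
- move=> J L JL; rewrite /x'; case: ifP => // JL'.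
  rewrite !mulr_ge0 //; apply: sumr_ge0 => i _; apply: sumr_ge0 => i' _.
  by apply: Hx; apply: jj_lt.
Qed.

Lemma constrB (R : realType) (n : nat) (a d : 'I_(n.+1 + n.+1) -> R) f x :
  @lp_feasible R (n.+1 + n.+1) false a d f x ->
  \sum_j a j <= 5 /\
  exists a' d' f' x', @lp_feasible R (n.+1 + n.+1) true a' d' f' x' /\
     \sum_j a' j = (n.+1%:R / n.+3%:R) * \sum_j a j.
Proof.
move=> [[Hb Hm Hp Hc] [Hr Ha Hd Hf Hx]].
have N0 : (0 : R) < n.+1%:R by rewrite ltr0n.
have sd0 : 0 <= \sum_j d j by apply: sumr_ge0.
have dlsum : \sum_(l < n.+1) d (lshift n.+1 l) <= \sum_j d j.
  by rewrite [X in _ <= X]big_split_ord /= lerDl; apply: sumr_ge0.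
have drsum : \sum_(l < n.+1) d (rshift n.+1 l) <= \sum_j d j.
  by rewrite [X in _ <= X]big_split_ord /= lerDr; apply: sumr_ge0.
have F1 : forall l : 'I_n.+1, n.+1%:R * a (lshift n.+1 l) <= f + \sum_j d j.
  move=> l; have H1 := Hr (lshift n.+1 l).
  have H2 : \sum_(i < n.+1) x (lshift n.+1 l) (rshift n.+1 i) <=
      \sum_(m < n.+1 + n.+1 | (lshift n.+1 l <= m)%N) x (lshift n.+1 l) m.
    rewrite [X in _ <= X]big_mkcond big_split_ord /=.
    rewrite [X in _ <= _ + X](eq_bigr (fun i => x (lshift n.+1 l) (rshift n.+1 i))); last first.
      by move=> i _; rewrite ifT //; apply: leq_trans (ltnW (ltn_ord l)) (leq_addr _ _).
    rewrite lerDr; apply: sumr_ge0 => i _; case: ifP => // H; exact: Hx.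
  have H3 : \sum_(i < n.+1) (a (lshift n.+1 l) - d (rshift n.+1 i)) <=
      \sum_(i < n.+1) x (lshift n.+1 l) (rshift n.+1 i).
    apply: ler_sum => i _; apply: Hc => /=.
    exact: leq_trans (ltn_ord l) (leq_addr _ _).
  move: H3; rewrite sumrB sumr_const card_ord -mulr_natl => H3.
  lra.
set B := f + \sum_j d j.
have EB : B = f + \sum_j d j by [].
set S := \sum_(l < n.+1) (a (lshift n.+1 l) + d (lshift n.+1 l)).
set c := S / n.+1%:R.
have F2 : forall j, a j - d j <= c.
  move=> j; rewrite /c ler_pdivlMr //.
  have : \sum_(l < n.+1) (a j - d j) <= S.
    by apply: ler_sum => l _; move: (Hp j (lshift n.+1 l)); lra.
  by rewrite sumr_const card_ord => H; apply: le_trans H; rewrite -[X in _ <= X]mulr_natr.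
have Sa : \sum_(l < n.+1) a (lshift n.+1 l) <= B.
  rewrite -(ler_pM2l N0) mulr_sumr.
  apply: le_trans (ler_sum _ (fun l _ => F1 l)) _.
  by rewrite sumr_const card_ord -[X in X <= _]mulr_natl /B.
have Nc : n.+1%:R * c <= 2 * B.
  rewrite /c mulrC mulfVK; last by rewrite pnatr_eq0.
  rewrite /S big_split /=; lra.
have c0 : 0 <= c.
  rewrite /c divr_ge0 // /S; apply: sumr_ge0 => l _; rewrite addr_ge0 //.
split.
  have : \sum_j a j <= \sum_j (d j + c).
    by apply: ler_sum => j _; move: (F2 j); lra.
  rewrite big_split /= sumr_const card_ord mulrnDr -mulr_natl.
  move: Nc; rewrite /B; lra.
have N3 : (0 : R) < n.+3%:R by rewrite ltr0n.
set lam := n.+1%:R / n.+3%:R.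
have lam0 : 0 <= lam by rewrite /lam divr_ge0 // ler0n.
exists (fun j => lam * a j), (fun j => lam * d j), (lam * (f + c)),
  (fun j l : 'I_(n.+1 + n.+1) => if (j < l)%N then lam * x j l else lam * c).
split; last by rewrite mulr_sumr.
split; split.
- rewrite -mulr_sumr -mulrDr /lam mulrAC ler_pdivrMr // mul1r.
  have -> : (n.+3%:R : R) = n.+1%:R + 2 by rewrite -natr1 -natr1; lra.
  have HB : n.+1%:R * B <= n.+1%:R * 1 by rewrite ler_wpM2l ?ler0n.
  rewrite -addrA [c + _]addrC addrA -EB mulrDr; move: HB; lra.
- by move=> j l E; rewrite ler_wpM2l //; apply: Hm.
- by move=> j l; rewrite -!mulrDr ler_wpM2l //; apply: Hp.
- move=> j l /= jl; case: ltnP => jl'.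
    by rewrite -mulrBr ler_wpM2l //; apply: Hc.
  have E : j = l by apply: val_inj; apply/eqP; rewrite eqn_leq jl jl'.
  by rewrite -E -mulrBr ler_wpM2l.
- move=> j; rewrite (bigD1 j) //= ltnn.
  rewrite (eq_bigl (fun l : 'I_(n.+1 + n.+1) => (j < l)%N)); last first.
    by move=> l; rewrite ltn_neqAle andbC eq_sym.
  rewrite (eq_bigr (fun l => lam * x j l)); last by move=> l ->.
  rewrite -mulr_sumr mulrDr addrC lerD2r ler_wpM2l //.
  apply: le_trans (Hr j); rewrite [X in _ <= X](bigD1 j) //=.
  rewrite [X in _ <= _ + X](eq_bigl (fun l : 'I_(n.+1 + n.+1) => (j < l)%N)).
    by rewrite lerDr; exact: Hx.
  by move=> l; rewrite ltn_neqAle andbC eq_sym.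
- by move=> j; rewrite mulr_ge0.
- by move=> j; rewrite mulr_ge0.
- by rewrite mulr_ge0 // addr_ge0.
- move=> j l jl; case: ifP => H; rewrite mulr_ge0 //; exact: Hx.
Qed.

Lemma zero_feas (R : realType) k b :
  @lp_feasible R k b (fun _ => 0) (fun _ => 0) 0 (fun _ _ => 0).
Proof.
split; split => //=; try (by rewrite big1 // add0r ler01);
  try (by move=> *; rewrite big1); by move=> *; rewrite ?addr0 ?subr0.
Qed.

Lemma arith (R : realType) (k : nat) (s r : R) :
  s <= 5 -> (10 * k + 9).+1%:R / (10 * k + 9).+3%:R * r <= s -> r <= s + k.+1%:R^-1.
Proof.
move=> s5 H.
have u0 : (0 : R) < k.+1%:R by rewrite ltr0n.
have E1 : ((10 * k + 9).+1%:R : R) = 10 * k.+1%:R.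
  by rewrite -[10 : R]/(10%:R) -natrM; congr (_%:R); lia.
have E3 : ((10 * k + 9).+3%:R : R) = 10 * k.+1%:R + 2.
  by rewrite -[10 : R]/(10%:R) -[2 : R]/(2%:R) -natrM -natrD; congr (_%:R); lia.
rewrite E1 E3 mulrAC ler_pdivrMr in H; last by lra.
have E : 10 * k.+1%:R * (s + k.+1%:R^-1) = 10 * k.+1%:R * s + 10 :> R.
  by field; rewrite lt0r_neq0.
rewrite -(ler_pM2l (_ : 0 < 10 * k.+1%:R)); last by lra.
rewrite E; nra.
Qed.

Local Open Scope classical_set_scope.
Local Open Scope ereal_scope.

Lemma zA_le (R : realType) K M : zm R K.+1 <= xm R M.+1.
Proof.
rewrite /zm /xm /lp_value; apply: le_ereal_sup => r [a [d [f [x [Hf ->]]]]].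
have [a' [d' [f' [x' [Hf' Hs]]]]] := @constrA R K M a d f x Hf.
by exists a', d', f', x'; split => //; rewrite Hs.
Qed.

Lemma xB_le (R : realType) (n : nat) (r : \bar R) :
  [set r : \bar R | exists alpha d f x,
     @lp_feasible R (n.+1 + n.+1)%N false alpha d f x /\ r = (\sum_(j < (n.+1 + n.+1)%N) alpha j)%:E] r ->
  exists r' : R, r = r'%:E /\ (r' <= 5)%R /\
    ((n.+1%:R / n.+3%:R) * r')%R%:E <= zm R (n.+1 + n.+1)%N.
Proof.
move=> [a [d [f [x [Hf ->]]]]].
have [H5 [a' [d' [f' [x' [Hf' Hs]]]]]] := @constrB R n a d f x Hf.
exists (\sum_j a j)%R; split => //; split => //.
apply: ereal_sup_ubound; exists a', d', f', x'; split => //; by rewrite Hs.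
Qed.

Theorem theorem1 (R : realType) :
  ereal_sup [set zm R k | k in [set k : nat | (0 < k)%N]] =
  ereal_inf [set xm R k | k in [set k : nat | (0 < k)%N]].
Proof.
have le1 : ereal_sup [set zm R k | k in [set k : nat | (0 < k)%N]] <=
           ereal_inf [set xm R k | k in [set k : nat | (0 < k)%N]].
  apply: ge_ereal_sup => _ [k k0 <-]; apply: le_ereal_inf_tmp => _ [m m0 <-].
  by case: k k0 => // K _; case: m m0 => // M _; exact: zA_le.
have X5 : ereal_inf [set xm R k | k in [set k : nat | (0 < k)%N]] <= 5%:E.
  apply: le_trans (ereal_inf_lbound _) _; first by exists 2%N.
  rewrite /xm /lp_value; apply: ge_ereal_sup => r /(@xB_le R 0%N) [r' [-> [H5 _]]].
  by rewrite lee_fin.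
have Z0 : 0%:E <= ereal_sup [set zm R k | k in [set k : nat | (0 < k)%N]].
  apply: le_trans (_ : zm R 1 <= _); last by apply: ereal_sup_ubound; exists 1%N.
  apply: ereal_sup_ubound.
  exists (fun _ => 0%R), (fun _ => 0%R), 0%R, (fun _ _ => 0%R); split.
    exact: zero_feas.
  by rewrite big1.
case Es: (ereal_sup _) le1 Z0 => [s| |] le1 Z0 //; last first.
  by move: (le_trans le1 X5).
apply: le_anti; rewrite le1 /=.
have s5 : (s <= 5)%R by rewrite -lee_fin; apply: le_trans le1 X5.
case EI: (ereal_inf _) le1 X5 => [t| |] le1 X5 //.
rewrite lee_fin leNgt; apply/negP => st.
have [k Hk] := ltr_add_invr st.
pose n := (10 * k + 9)%N.
have H1 : ereal_inf [set xm R k | k in [set k : nat | (0 < k)%N]] <= xm R (n.+1 + n.+1).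
  by apply: ereal_inf_lbound; exists (n.+1 + n.+1)%N.
have H2 : xm R (n.+1 + n.+1) <= (s + k.+1%:R^-1)%:E.
  rewrite /xm /lp_value; apply: ge_ereal_sup => r /(@xB_le R n) [r' [-> [H5 Hz]]].
  have : ((n.+1%:R / n.+3%:R) * r')%R%:E <= s%:E.
    apply: le_trans Hz _; rewrite -Es; apply: ereal_sup_ubound.
    by exists (n.+1 + n.+1)%N.
  by rewrite !lee_fin; apply: arith.
move: (le_trans H1 H2); rewrite EI lee_fin => H.
by move: (lt_le_trans Hk H); rewrite ltxx.
Qed.
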